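(* Let $(X,d_X)$ and $(Y,d_Y)$ be separable metric spaces such that $d_X$ is an ultrametric. For every $f: X\to Y$ the following are equivalent: (i) $f$ is of Baire class $1$; (ii) $f$ is the pointwise limit of a sequence of $\omega$-full functions; (iii) $f$ is the pointwise limit of a sequence of Lipschitz functions; (iv) $f$ is the pointwise limit of a sequence of uniformly continuous functions.
   Context: Work in ZF plus countable choice over the reals. A function $f:X\to Y$ is of Baire class $1$ if $f^{-1}(U)\in\mathbf{\Sigma}^0_2(X)$ for every open $U\subseteq Y$. A set $A\subseteq X$ is full with constant $r>0$ if $B(x,r)=\{y\in X:d_X(x,y)<r\}\subseteq A$ for every $x\in A$. A function $f:X\to Y$ is $\omega$-full if it has at most countably many values and there is a fixed $r>0$ such that the preimage of each value is a full set with constant $r$. A function $g:X\to Y$ is Lipschitz if there is $L>0$ with $d_Y(g(x),g(x'))\le L\, d_X(x,x')$ for all $x,x'\in X$. *)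

(* Defs.v *)
From Stdlib Require Import Reals.
Open Scope R_scope.

Definition is_metric {T : Type} (d : T -> T -> R) : Prop :=
  (forall x y, 0 <= d x y) /\
  (forall x y, d x y = 0 <-> x = y) /\
  (forall x y, d x y = d y x) /\
  (forall x y z, d x z <= d x y + d y z).

Definition is_ultrametric {T : Type} (d : T -> T -> R) : Prop :=
  forall x y z, d x z <= Rmax (d x y) (d y z).

Definition countable_set {T : Type} (A : T -> Prop) : Prop :=
  exists h : T -> nat, forall a b, A a -> A b -> h a = h b -> a = b.

Definition ball {T : Type} (d : T -> T -> R) (x : T) (r : R) : T -> Prop :=
  fun y => d x y < r.

Definition separable {T : Type} (d : T -> T -> R) : Prop :=
  exists D : T -> Prop, countable_set D /\
    forall x eps, 0 < eps -> exists z, D z /\ d x z < eps.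

Definition is_open {T : Type} (d : T -> T -> R) (U : T -> Prop) : Prop :=
  forall x, U x -> exists r, 0 < r /\ forall y, ball d x r y -> U y.

Definition is_closed {T : Type} (d : T -> T -> R) (F : T -> Prop) : Prop :=
  is_open d (fun x => ~ F x).

Definition Sigma02 {T : Type} (d : T -> T -> R) (A : T -> Prop) : Prop :=
  exists F : nat -> T -> Prop, (forall n, is_closed d (F n)) /\
    forall x, A x <-> exists n, F n x.

Definition baire_class1 {X Y : Type} (dX : X -> X -> R) (dY : Y -> Y -> R)
  (f : X -> Y) : Prop :=
  forall U : Y -> Prop, is_open dY U -> Sigma02 dX (fun x => U (f x)).

Definition full_set {X : Type} (dX : X -> X -> R) (A : X -> Prop) (r : R) : Prop :=
  forall x, A x -> forall y, ball dX x r y -> A y.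

Definition omega_full {X Y : Type} (dX : X -> X -> R) (f : X -> Y) : Prop :=
  countable_set (fun y => exists x, f x = y) /\
  exists r, 0 < r /\ forall y : Y, full_set dX (fun x => f x = y) r.

Definition lipschitz {X Y : Type} (dX : X -> X -> R) (dY : Y -> Y -> R)
  (g : X -> Y) : Prop :=
  exists L, 0 < L /\ forall x x', dY (g x) (g x') <= L * dX x x'.

Definition unif_continuous {X Y : Type} (dX : X -> X -> R) (dY : Y -> Y -> R)
  (g : X -> Y) : Prop :=
  forall eps, 0 < eps -> exists delta, 0 < delta /\
    forall x x', dX x x' < delta -> dY (g x) (g x') < eps.

Definition pointwise_limit {X Y : Type} (dY : Y -> Y -> R)
  (fs : nat -> X -> Y) (f : X -> Y) : Prop :=
  forall x eps, 0 < eps -> exists N, forall n, (N <= n)%nat -> dY (fs n x) (f x) < eps.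

(* Main.v *)
Require Import Defs.
From Stdlib Require Import Reals Lra Lia Classical ClassicalEpsilon.
From Stdlib Require Cantor.
Open Scope R_scope.

Definition rho (k : nat) : R := / INR (S k).

Lemma rho_pos k : 0 < rho k.
Proof. unfold rho. apply Rinv_0_lt_compat. apply lt_0_INR. lia. Qed.

Lemma rho_mono n m : (n <= m)%nat -> rho m <= rho n.
Proof.
  intro H. unfold rho. apply Rinv_le_contravar. apply lt_0_INR; lia.
  apply le_INR; lia.
Qed.

Lemma rho_small eps : 0 < eps -> exists k, rho k < eps.
Proof.
  intro H. destruct (archimed_cor1 eps H) as [N [H1 H2]].
  exists (pred N). unfold rho. replace (S (pred N)) with N by lia. exact H1.
Qed.

Lemma rho_eventually eps : 0 < eps -> exists N, forall n, (N <= n)%nat -> rho n < eps.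
Proof.
  intro H. destruct (rho_small eps H) as [k Hk]. exists k. intros n Hn.
  pose proof (rho_mono k n Hn). lra.
Qed.

Section Metric.
Context {T : Type} (d : T -> T -> R) (hd : is_metric d).

Lemma m_nonneg x y : 0 <= d x y.
Proof. destruct hd as [a _]. apply a. Qed.
Lemma m_refl x : d x x = 0.
Proof. destruct hd as [_ [b _]]. apply b. reflexivity. Qed.
Lemma m_eq x y : d x y = 0 -> x = y.
Proof. destruct hd as [_ [b _]]. apply b. Qed.
Lemma m_sym x y : d x y = d y x.
Proof. destruct hd as [_ [_ [c _]]]. apply c. Qed.
Lemma m_tri x y z : d x z <= d x y + d y z.
Proof. destruct hd as [_ [_ [_ e]]]. apply e. Qed.
End Metric.

Lemma lipschitz_uc {X Y} (dX : X -> X -> R) (dY : Y -> Y -> R) g :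
  lipschitz dX dY g -> unif_continuous dX dY g.
Proof.
  intros [L [HL H]] eps He. exists (eps / L). split.
  - apply Rdiv_lt_0_compat; lra.
  - intros x x' Hx. eapply Rle_lt_trans. apply H.
    apply Rmult_lt_compat_l with (r := L) in Hx; [|lra].
    replace (L * (eps / L)) with eps in Hx by (field; lra). exact Hx.
Qed.

Lemma omega_full_uc {X Y} (dX : X -> X -> R) (dY : Y -> Y -> R) (hY : is_metric dY) g :
  omega_full dX g -> unif_continuous dX dY g.
Proof.
  intros [_ [r [Hr H]]] eps He. exists r. split; [exact Hr|].
  intros x x' Hx. assert (E : g x' = g x) by (apply (H (g x) x eq_refl); exact Hx).
  rewrite E, (m_refl dY hY). exact He.
Qed.

Lemma uc_limit_B1 {X Y} (dX : X -> X -> R) (dY : Y -> Y -> R)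
  (hX : is_metric dX) (hY : is_metric dY) fs f :
  (forall n, unif_continuous dX dY (fs n)) -> pointwise_limit dY fs f ->
  baire_class1 dX dY f.
Proof.
  intros Huc Hlim U HU.
  set (Fk := fun k y => forall z, dY y z < rho k -> U z).
  set (Cs := fun k N x => forall n, (N <= n)%nat -> Fk k (fs n x)).
  exists (fun m => Cs (fst (Cantor.of_nat m)) (snd (Cantor.of_nat m))). split.
  - intros m. set (k := fst (Cantor.of_nat m)). set (N := snd (Cantor.of_nat m)).
    intros x Hx. unfold Cs in Hx.
    destruct (not_all_ex_not _ _ Hx) as [n Hn].
    apply imply_to_and in Hn. destruct Hn as [HNn Hn].
    destruct (not_all_ex_not _ _ Hn) as [z Hz].
    apply imply_to_and in Hz. destruct Hz as [Hz1 Hz2].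
    destruct (Huc n (rho k - dY (fs n x) z)) as [de [Hde H]]; [lra|].
    exists de. split; [exact Hde|]. intros x' Hx' HC.
    apply Hz2. apply (HC n HNn). specialize (H x x' Hx').
    pose proof (m_tri dY hY (fs n x') (fs n x) z).
    rewrite (m_sym dY hY (fs n x') (fs n x)) in H0. lra.
  - intros x. split.
    + intros Hfx. destruct (HU _ Hfx) as [r [Hr Hb]].
      destruct (rho_small (r/2)) as [k Hk]; [lra|].
      destruct (Hlim x (rho k) (rho_pos k)) as [N HN].
      exists (Cantor.to_nat (k, N)). rewrite Cantor.cancel_of_to. simpl.
      intros n Hn z Hz. apply Hb. unfold ball.
      specialize (HN n Hn).
      pose proof (m_tri dY hY (f x) (fs n x) z).
      rewrite (m_sym dY hY (f x) (fs n x)) in H. lra.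
    + intros [m Hm]. set (k := fst (Cantor.of_nat m)) in Hm.
      set (N := snd (Cantor.of_nat m)) in Hm.
      destruct (Hlim x (rho k) (rho_pos k)) as [N' HN'].
      apply (Hm (max N N')). lia. apply HN'. lia.
Qed.
Definition isLeast (P : nat -> Prop) a := P a /\ forall q, (q < a)%nat -> ~ P q.
Definition isLargest (P : nat -> Prop) n a :=
  (a <= n)%nat /\ P a /\ forall j, (a < j)%nat -> (j <= n)%nat -> ~ P j.

Lemma ex_least (P : nat -> Prop) : (exists p, P p) -> exists a, isLeast P a.
Proof.
  intros [p Hp]. apply NNPP. intro Hn.
  assert (H : forall n q, (q <= n)%nat -> ~ P q).
  { induction n as [|n IH]; intros q Hq HPq.
    - apply Hn. exists q. split; [exact HPq|]. intros q' Hq'. lia.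
    - destruct (Nat.eq_dec q (S n)) as [->|Hne].
      + apply Hn. exists (S n). split; [exact HPq|]. intros q' Hq'. apply IH. lia.
      + apply (IH q); [lia|exact HPq]. }
  exact (H p p (le_n p) Hp).
Qed.

Lemma least_unique (P Q : nat -> Prop) a b :
  isLeast P a -> isLeast Q b -> (forall p, P p <-> Q p) -> a = b.
Proof.
  intros [Pa Ha] [Qb Hb] E.
  destruct (Nat.lt_trichotomy a b) as [H|[H|H]]; auto.
  - exfalso. apply (Hb a H). apply E. exact Pa.
  - exfalso. apply (Ha b H). apply E. exact Qb.
Qed.

Lemma ex_largest (P : nat -> Prop) n : P 0%nat -> exists a, isLargest P n a.
Proof.
  intro H0. induction n as [|n IH].
  - exists 0%nat. split; [lia|]. split; [exact H0|]. intros. lia.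
  - destruct (classic (P (S n))) as [HS|HS].
    + exists (S n). split; [lia|]. split; [exact HS|]. intros. lia.
    + destruct IH as [a [Ha1 [Ha2 Ha3]]]. exists a. split; [lia|]. split; [exact Ha2|].
      intros j Hj1 Hj2. destruct (Nat.eq_dec j (S n)) as [->|Hne]; [exact HS|].
      apply Ha3; lia.
Qed.

Lemma largest_unique (P Q : nat -> Prop) n a b :
  isLargest P n a -> isLargest Q n b -> (forall p, P p <-> Q p) -> a = b.
Proof.
  intros [Ha1 [Pa Ha]] [Hb1 [Qb Hb]] E.
  destruct (Nat.lt_trichotomy a b) as [H|[H|H]]; auto.
  - exfalso. apply (Ha b H Hb1). apply E. exact Qb.
  - exfalso. apply (Hb a H Ha1). apply E. exact Pa.
Qed.

Definition least (P : nat -> Prop) : nat := epsilon (inhabits 0%nat) (isLeast P).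
Lemma least_spec P : (exists p, P p) -> isLeast P (least P).
Proof. intro H. unfold least. apply epsilon_spec. apply ex_least. exact H. Qed.

Section Construction.
Context (X Y : Type) (dX : X -> X -> R) (dY : Y -> Y -> R)
  (hX : is_metric dX) (hY : is_metric dY) (uX : is_ultrametric dX) (f : X -> Y)
  (C : nat -> nat -> X -> Prop) (c : nat -> Y)
  (Cclosed : forall i p, is_closed dX (C i p))
  (Ccover : forall i x, exists p, C i p x)
  (Ccorrect : forall i p x, C i p x -> dY (c p) (f x) < rho i).

Definition Pm x n i p := exists z, dX x z < rho n /\ C i p z.
Definition tau x n i := least (Pm x n i).
Definition cons x n i := forall j, (j <= i)%nat ->
  dY (c (tau x n i)) (c (tau x n j)) < rho i + rho j.
Definition lvl x n := epsilon (inhabits 0%nat) (isLargest (cons x n) n).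
Definition fn n x := c (tau x n (lvl x n)).
Definition g n x := if Rle_dec (dY (c 0%nat) (fn n x)) (INR n) then fn n x else c 0%nat.

Lemma tau_spec x n i : isLeast (Pm x n i) (tau x n i).
Proof.
  apply least_spec. destruct (Ccover i x) as [p Hp]. exists p, x.
  rewrite (m_refl dX hX). split; [apply rho_pos|exact Hp].
Qed.

Lemma cons0 x n : cons x n 0%nat.
Proof.
  intros j Hj. replace j with 0%nat by lia. rewrite (m_refl dY hY).
  pose proof (rho_pos 0). lra.
Qed.

Lemma lvl_spec x n : isLargest (cons x n) n (lvl x n).
Proof. unfold lvl. apply epsilon_spec. apply ex_largest. apply cons0. Qed.

Lemma ball_same x x' r : dX x x' < r -> forall z, dX x z < r -> dX x' z < r.
Proof.
  intros H z Hz. pose proof (uX x' x z). rewrite (m_sym dX hX x' x) in H0.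
  unfold Rmax in H0. destruct (Rle_dec (dX x x') (dX x z)); lra.
Qed.

Lemma fn_same n x x' : dX x x' < rho n -> fn n x = fn n x'.
Proof.
  intro H. assert (H' : dX x' x < rho n) by (rewrite (m_sym dX hX); exact H).
  assert (Ht : forall i, tau x n i = tau x' n i).
  { intro i. apply (least_unique _ _ _ _ (tau_spec x n i) (tau_spec x' n i)).
    intro p; split; intros [z [Hz1 Hz2]]; exists z; split; auto.
    - apply (ball_same x x'); auto.
    - apply (ball_same x' x); auto. }
  assert (Hl : lvl x n = lvl x' n).
  { apply (largest_unique _ _ _ _ _ (lvl_spec x n) (lvl_spec x' n)).
    intro p; unfold cons; split; intros Hc j Hj; specialize (Hc j Hj).
    - rewrite !Ht in Hc; exact Hc.
    - rewrite !Ht; exact Hc. }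
  unfold fn. rewrite Hl, Ht. reflexivity.
Qed.

Lemma finite_radius (A : nat -> X -> Prop) x p :
  (forall q, (q < p)%nat -> exists r, 0 < r /\ forall y, dX x y < r -> ~ A q y) ->
  exists r, 0 < r /\ forall q, (q < p)%nat -> forall y, dX x y < r -> ~ A q y.
Proof.
  induction p as [|p IH]; intro H.
  - exists 1. split; [lra|]. intros. lia.
  - destruct IH as [r1 [Hr1 H1]]. { intros q Hq. apply H. lia. }
    destruct (H p (Nat.lt_succ_diag_r p)) as [r2 [Hr2 H2]].
    exists (Rmin r1 r2). split. { unfold Rmin; destruct (Rle_dec r1 r2); lra. }
    intros q Hq y Hy. pose proof (Rmin_l r1 r2). pose proof (Rmin_r r1 r2).
    destruct (Nat.eq_dec q p) as [->|Hne].
    + apply H2. lra.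
    + apply H1. lia. lra.
Qed.

Lemma tau_event x l : exists N, forall n, (N <= n)%nat -> C l (tau x n l) x.
Proof.
  destruct (ex_least (fun p => C l p x) (Ccover l x)) as [ps [Hps1 Hps2]].
  destruct (finite_radius (C l) x ps) as [r [Hr Hrad]].
  { intros q Hq. destruct (Cclosed l q x (Hps2 q Hq)) as [r [Hr Hb]].
    exists r. split; [exact Hr|]. intros y Hy. apply Hb. exact Hy. }
  destruct (rho_eventually r Hr) as [N HN]. exists N. intros n Hn.
  assert (E : tau x n l = ps).
  { symmetry. apply (least_unique (Pm x n l) (Pm x n l)); [|apply tau_spec|tauto].
    split.
    - exists x. rewrite (m_refl dX hX). split; [apply rho_pos|exact Hps1].
    - intros q Hq [z [Hz1 Hz2]]. apply (Hrad q Hq z); [|exact Hz2].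
      specialize (HN n Hn). lra. }
  rewrite E. exact Hps1.
Qed.

Lemma all_levels x j : exists N, forall n, (N <= n)%nat -> forall l, (l <= j)%nat ->
  C l (tau x n l) x.
Proof.
  induction j as [|j IH].
  - destruct (tau_event x 0) as [N HN]. exists N. intros n Hn l Hl.
    replace l with 0%nat by lia. auto.
  - destruct IH as [N1 H1]. destruct (tau_event x (S j)) as [N2 H2].
    exists (max N1 N2). intros n Hn l Hl.
    destruct (Nat.eq_dec l (S j)) as [->|Hne].
    + apply H2. lia.
    + apply H1; lia.
Qed.

Lemma fn_conv x eps : 0 < eps -> exists N, forall n, (N <= n)%nat -> dY (fn n x) (f x) < eps.
Proof.
  intro He. destruct (rho_small (eps/3)) as [j Hj]; [lra|].
  destruct (all_levels x j) as [N1 H1]. exists (max N1 j). intros n Hn.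
  assert (Hc : forall l, (l <= j)%nat -> dY (c (tau x n l)) (f x) < rho l).
  { intros l Hl. apply Ccorrect. apply H1; [lia|exact Hl]. }
  assert (Hcj : cons x n j).
  { intros j' Hj'. pose proof (m_tri dY hY (c (tau x n j)) (f x) (c (tau x n j'))).
    rewrite (m_sym dY hY (f x)) in H. pose proof (Hc j (le_n j)).
    pose proof (Hc j' Hj'). lra. }
  destruct (lvl_spec x n) as [Hl1 [Hl2 Hl3]].
  assert (Hge : (j <= lvl x n)%nat).
  { destruct (Nat.le_gt_cases j (lvl x n)) as [H|H]; auto.
    exfalso. apply (Hl3 j H); [lia|exact Hcj]. }
  specialize (Hl2 j Hge). pose proof (rho_mono j (lvl x n) Hge).
  unfold fn. pose proof (m_tri dY hY (c (tau x n (lvl x n))) (c (tau x n j)) (f x)).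
  pose proof (Hc j (le_n j)). lra.
Qed.

Lemma g_values n x : exists q, g n x = c q.
Proof. unfold g, fn. destruct (Rle_dec _ _); eexists; reflexivity. Qed.

Lemma g_same n x x' : dX x x' < rho n -> g n x = g n x'.
Proof. intro H. unfold g. rewrite (fn_same n x x' H). reflexivity. Qed.

Lemma g_bound n x : dY (c 0%nat) (g n x) <= INR n.
Proof.
  unfold g. destruct (Rle_dec _ _) as [H|H]; [exact H|].
  rewrite (m_refl dY hY). apply pos_INR.
Qed.

Lemma g_omega n : omega_full dX (g n).
Proof.
  split.
  - exists (fun y => epsilon (inhabits 0%nat) (fun q => c q = y)).
    intros a b [xa Ha] [xb Hb] E.
    assert (Sa : c (epsilon (inhabits 0%nat) (fun q => c q = a)) = a).
    { apply epsilon_spec. destruct (g_values n xa) as [q Hq]. exists q. congruence. }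
    assert (Sb : c (epsilon (inhabits 0%nat) (fun q => c q = b)) = b).
    { apply epsilon_spec. destruct (g_values n xb) as [q Hq]. exists q. congruence. }
    rewrite <- Sa, <- Sb, E. reflexivity.
  - exists (rho n). split; [apply rho_pos|]. intros y x Hx x' Hx'.
    rewrite <- Hx. symmetry. apply g_same. exact Hx'.
Qed.

Lemma g_lip n : lipschitz dX dY (g n).
Proof.
  pose proof (rho_pos n) as Hr. pose proof (pos_INR n) as Hn.
  exists ((2 * INR n + 1) / rho n). split.
  { apply Rdiv_lt_0_compat; lra. }
  intros x x'. destruct (Rlt_le_dec (dX x x') (rho n)) as [H|H].
  - rewrite (g_same n x x' H), (m_refl dY hY).
    apply Rmult_le_pos. apply Rlt_le, Rdiv_lt_0_compat; lra. apply (m_nonneg dX hX).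
  - pose proof (m_tri dY hY (g n x) (c 0%nat) (g n x')).
    rewrite (m_sym dY hY (g n x) (c 0%nat)) in H0.
    pose proof (g_bound n x). pose proof (g_bound n x').
    apply Rle_trans with (2 * INR n + 1); [lra|].
    replace (2 * INR n + 1) with ((2 * INR n + 1) / rho n * rho n) at 1 by (field; lra).
    apply Rmult_le_compat_l; [apply Rlt_le, Rdiv_lt_0_compat; lra|exact H].
Qed.

Lemma g_conv : pointwise_limit dY g f.
Proof.
  intros x eps He. destruct (fn_conv x (Rmin eps 1)) as [N1 H1].
  { unfold Rmin; destruct (Rle_dec eps 1); lra. }
  destruct (INR_unbounded (dY (c 0%nat) (f x) + 1)) as [N2 H2].
  exists (max N1 N2). intros n Hn. specialize (H1 n ltac:(lia)).
  pose proof (Rmin_l eps 1). pose proof (Rmin_r eps 1).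
  assert (E : g n x = fn n x).
  { unfold g. destruct (Rle_dec _ _) as [_|Hc]; [reflexivity|exfalso; apply Hc].
    pose proof (m_tri dY hY (c 0%nat) (f x) (fn n x)).
    rewrite (m_sym dY hY (f x)) in H3. pose proof (le_INR N2 n ltac:(lia)). lra. }
  rewrite E. lra.
Qed.

End Construction.
Lemma ball_open {Y} (dY : Y -> Y -> R) (hY : is_metric dY) y r : is_open dY (ball dY y r).
Proof.
  intros z Hz. unfold ball in Hz. exists (r - dY y z). split; [lra|].
  intros w Hw. unfold ball in *. pose proof (m_tri dY hY y z w). lra.
Qed.

Lemma B1_approx (X Y : Type) (dX : X -> X -> R) (dY : Y -> Y -> R)
  (hX : is_metric dX) (hY : is_metric dY) (uX : is_ultrametric dX)
  (sY : separable dY) (f : X -> Y) :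
  baire_class1 dX dY f ->
  exists gs : nat -> X -> Y, (forall n, omega_full dX (gs n)) /\
    (forall n, lipschitz dX dY (gs n)) /\ pointwise_limit dY gs f.
Proof.
  intro HB. destruct (classic (inhabited X)) as [[x0]|HX].
  2:{ exists (fun _ => f). split; [|split].
      - intro n. split.
        + exists (fun _ => 0%nat). intros a b [xa _]. exfalso. exact (HX (inhabits xa)).
        + exists 1. split; [lra|]. intros y x. exfalso. exact (HX (inhabits x)).
      - intro n. exists 1. split; [lra|]. intros x. exfalso. exact (HX (inhabits x)).
      - intros x. exfalso. exact (HX (inhabits x)). }
  destruct sY as [D [[h Hh] Hdense]].
  set (e := fun k => epsilon (inhabits (f x0)) (fun y => D y /\ h y = k)).
  assert (He : forall z, D z -> e (h z) = z).
  { intros z Hz. assert (S : D (e (h z)) /\ h (e (h z)) = h z).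
    { apply epsilon_spec. exists z. auto. }
    destruct S as [S1 S2]. apply Hh; auto. }
  assert (HS : forall i k, Sigma02 dX (fun x => ball dY (e k) (rho i) (f x))).
  { intros i k. apply HB. apply ball_open. exact hY. }
  set (Fs := fun i k => proj1_sig (constructive_indefinite_description _ (HS i k))).
  assert (HFs : forall i k, (forall m, is_closed dX (Fs i k m)) /\
     forall x, ball dY (e k) (rho i) (f x) <-> exists m, Fs i k m x).
  { intros i k. exact (proj2_sig (constructive_indefinite_description _ (HS i k))). }
  set (C := fun i p => Fs i (fst (Cantor.of_nat p)) (snd (Cantor.of_nat p))).
  set (c := fun p => e (fst (Cantor.of_nat p))).
  assert (Cclosed : forall i p, is_closed dX (C i p)).
  { intros i p. apply (proj1 (HFs _ _)). }
  assert (Ccover : forall i x, exists p, C i p x).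
  { intros i x. destruct (Hdense (f x) (rho i) (rho_pos i)) as [z [Hz1 Hz2]].
    assert (Hb : ball dY (e (h z)) (rho i) (f x)).
    { unfold ball. rewrite (He z Hz1), (m_sym dY hY). exact Hz2. }
    destruct (proj1 (proj2 (HFs i (h z)) x) Hb) as [m Hm].
    exists (Cantor.to_nat (h z, m)). unfold C. rewrite Cantor.cancel_of_to. exact Hm. }
  assert (Ccorrect : forall i p x, C i p x -> dY (c p) (f x) < rho i).
  { intros i p x Hx. unfold C, c in *.
    apply (proj2 (proj2 (HFs i _) x)). eexists. exact Hx. }
  exists (g X Y dX dY C c). split; [|split].
  - intro n. apply g_omega; auto.
  - intro n. apply g_lip; auto.
  - apply g_conv; auto.
Qed.

Theorem mainTheorem2 (X Y : Type) (dX : X -> X -> R) (dY : Y -> Y -> R)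
  (hX : is_metric dX) (hY : is_metric dY) (uX : is_ultrametric dX)
  (sX : separable dX) (sY : separable dY) (f : X -> Y) :
  (baire_class1 dX dY f <->
     exists fs : nat -> X -> Y, (forall n, omega_full dX (fs n)) /\ pointwise_limit dY fs f) /\
  (baire_class1 dX dY f <->
     exists fs : nat -> X -> Y, (forall n, lipschitz dX dY (fs n)) /\ pointwise_limit dY fs f) /\
  (baire_class1 dX dY f <->
     exists fs : nat -> X -> Y, (forall n, unif_continuous dX dY (fs n)) /\ pointwise_limit dY fs f).
Proof.
  split; [|split]; split.
  - intro HB. destruct (B1_approx X Y dX dY hX hY uX sY f HB) as [gs [H1 [H2 H3]]].
    exists gs. auto.
  - intros [fs [H1 H2]]. apply (uc_limit_B1 dX dY hX hY fs f); auto.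
    intro n. apply omega_full_uc; auto.
  - intro HB. destruct (B1_approx X Y dX dY hX hY uX sY f HB) as [gs [H1 [H2 H3]]].
    exists gs. auto.
  - intros [fs [H1 H2]]. apply (uc_limit_B1 dX dY hX hY fs f); auto.
    intro n. apply lipschitz_uc; auto.
  - intro HB. destruct (B1_approx X Y dX dY hX hY uX sY f HB) as [gs [H1 [H2 H3]]].
    exists gs. split; auto. intro n. apply lipschitz_uc; auto.
  - intros [fs [H1 H2]]. apply (uc_limit_B1 dX dY hX hY fs f); auto.
Qed.
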